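(* Let $S,T$ be ordered trees, let $f\colon T\to S$ be a rigid surjection, and let $T'$ be a subtree of $T$. Then $f[T']$ is a subtree of $S$ and $f\upharpoonright T'\colon T'\to f[T']$ is a rigid surjection.
   Context: A tree is a finite, non-empty partially ordered set $(T,\sqsubseteq_T)$ with a smallest element (the root) such that the set of predecessors of each element is linearly ordered; each node counts as its own predecessor and successor. For $v,w\in T$, $v\wedge_T w$ is the $\sqsubseteq_T$-largest common predecessor. A tree is ordered if the set of immediate successors of each node carries a fixed linear order; this induces the lexicographic linear order $\leq_T$: $v\leq_T w$ if $v\sqsubseteq_T w$, and for incomparable $v,w$, $v\leq_T w$ iff the immediate successor of $v\wedge_T w$ below $v$ precedes the one below $w$. A subtree of $T$ is a non-empty subset closed downward under $\sqsubseteq_T$; it is an ordered tree with the inherited orders. A morphism $e\colon S\to T$ satisfies $e(v\wedge_S w)=e(v)\wedge_T e(w)$, is monotone from $\leq_S$ to $\leq_T$, and maps root to root. A function $f\colon T\to S$ is a rigid surjection if there is a morphism $e\colon S\to T$ with $f\circ e={\rm id}_S$ and $e(f(w))\sqsubseteq_T w$ for all $w\in T$. *)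

(* Defs.v *)
From mathcomp Require Import all_boot.
Set Implicit Arguments. Unset Strict Implicit. Unset Printing Implicit Defensive.

(* A tree order [tle] (written ⊑) on a finite type; [sib] is the
   (strict) linear order on the immediate successors of each node. *)

Section TreeDefs.
Variable (T : finType) (tle : rel T) (sib : rel T).

Definition isucc_on (A : {set T}) (v w : T) : Prop :=
  [/\ v \in A, w \in A, tle v w, v != w &
      forall u, u \in A -> tle v u -> tle u w -> u = v \/ u = w].

Definition is_root_on (A : {set T}) (r : T) : Prop :=
  r \in A /\ forall v, v \in A -> tle r v.

Definition is_meet_on (A : {set T}) (v w m : T) : Prop :=
  [/\ m \in A, tle m v, tle m w &
      forall u, u \in A -> tle u v -> tle u w -> tle u m].

Definition is_ordered_tree_on (A : {set T}) : Prop :=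
  [/\ A != set0,
      [/\ {in A, reflexive tle},
          {in A &, antisymmetric tle} &
          {in A & &, transitive tle}],
      (exists r, is_root_on A r),
      (forall u v w, u \in A -> v \in A -> w \in A ->
          tle u w -> tle v w -> tle u v \/ tle v u) &
      [/\ (forall a b, a \in A -> b \in A -> sib a b ->
             exists p, isucc_on A p a /\ isucc_on A p b),
          (forall a, ~ sib a a),
          (forall a b c, sib a b -> sib b c -> sib a c) &
          (forall p a b, isucc_on A p a -> isucc_on A p b ->
             a = b \/ sib a b \/ sib b a)]].

Definition lexle_on (A : {set T}) (v w : T) : Prop :=
  tle v w \/
  (~ tle v w /\ ~ tle w v /\
   exists m a b, [/\ is_meet_on A v w m, isucc_on A m a, isucc_on A m b,
                     tle a v /\ tle b w & sib a b]).

Definition is_subtree (A : {set T}) : Prop :=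
  A != set0 /\ forall v w, w \in A -> tle v w -> v \in A.

End TreeDefs.

Record ordTree := OrdTree {
  ot_car :> finType;
  tle : rel ot_car;
  sib : rel ot_car;
  ot_ax : is_ordered_tree_on tle sib [set: ot_car]
}.

Definition subtree (T : ordTree) (A : {set T}) : Prop := is_subtree (@tle T) A.

Definition morphism_on (S T : ordTree) (B : {set S}) (A : {set T}) (e : S -> T) : Prop :=
  [/\ (forall v, v \in B -> e v \in A),
      (forall v w m, v \in B -> w \in B ->
         is_meet_on (@tle S) B v w m -> is_meet_on (@tle T) A (e v) (e w) (e m)),
      (forall v w, v \in B -> w \in B ->
         lexle_on (@tle S) (@sib S) B v w -> lexle_on (@tle T) (@sib T) A (e v) (e w)) &
      (forall r, is_root_on (@tle S) B r -> is_root_on (@tle T) A (e r))].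

Definition rigid_surj_on (T S : ordTree) (A : {set T}) (B : {set S}) (f : T -> S) : Prop :=
  (forall w, w \in A -> f w \in B) /\
  exists e : S -> T,
    [/\ morphism_on B A e,
        (forall v, v \in B -> f (e v) = v) &
        (forall w, w \in A -> tle (e (f w)) w)].

Definition rigid_surj (T S : ordTree) (f : T -> S) : Prop :=
  rigid_surj_on [set: T] [set: S] f.

(* Main.v *)
Require Import Defs.
From mathcomp Require Import all_boot.
Set Implicit Arguments. Unset Strict Implicit. Unset Printing Implicit Defensive.

Section Aux.
Variable T : ordTree.

Lemma tle_refl (x : T) : tle x x.
Proof. case: (ot_ax T) => _ [R _ _] _ _ _. by apply: R; rewrite inE. Qed.

Lemma tle_anti (x y : T) : tle x y -> tle y x -> x = y.
Proof. case: (ot_ax T) => _ [_ An _] _ _ _ h1 h2. apply: An; rewrite ?inE //. by rewrite h1 h2. Qed.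

Lemma tle_trans (x y z : T) : tle x y -> tle y z -> tle x z.
Proof. case: (ot_ax T) => _ [_ _ Tr] _ _ _ h1 h2. by apply: (Tr y x z); rewrite ?inE. Qed.

Lemma root_ex : exists r : T, forall v, tle r v.
Proof. case: (ot_ax T) => _ _ [r [_ H]] _ _. exists r => v; apply: H; by rewrite inE. Qed.

Variable A : {set T}.
Hypothesis down : forall v w, w \in A -> tle v w -> v \in A.

Lemma meet_sub x y m : x \in A ->
  is_meet_on (@tle T) A x y m <-> is_meet_on (@tle T) [set: T] x y m.
Proof.
move=> xA; split.
- case=> mA h1 h2 h3; split; rewrite ?inE // => u _ u1 u2.
  exact: (h3 u (down xA u1) u1 u2).
- case=> _ h1 h2 h3; split => //; first exact: (down xA h1).
  move=> u _ u1 u2; exact: (h3 u (in_setT u) u1 u2).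
Qed.

Lemma isucc_sub m a : a \in A ->
  isucc_on (@tle T) A m a <-> isucc_on (@tle T) [set: T] m a.
Proof.
move=> aA; split.
- case=> mA _ h1 h2 h3; split; rewrite ?inE // => u _ u1 u2.
  exact: (h3 u (down aA u2) u1 u2).
- case=> _ _ h1 h2 h3; split => //; first exact: (down aA h1).
  move=> u _ u1 u2; exact: (h3 u (in_setT u) u1 u2).
Qed.

Lemma lexle_sub x y : x \in A -> y \in A ->
  lexle_on (@tle T) (@sib T) A x y <-> lexle_on (@tle T) (@sib T) [set: T] x y.
Proof.
move=> xA yA; split.
- case=> [h|[n1 [n2 [m [a [b [hm ha hb [hax hby] hs]]]]]]]; [by left|right].
  have aA : a \in A by exact: down hax.
  have bA : b \in A by exact: down hby.
  split=> //; split=> //; exists m, a, b; split => //.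
  + by apply/meet_sub.
  + by apply/isucc_sub.
  + by apply/isucc_sub.
- case=> [h|[n1 [n2 [m [a [b [hm ha hb [hax hby] hs]]]]]]]; [by left|right].
  have aA : a \in A by exact: down hax.
  have bA : b \in A by exact: down hby.
  split=> //; split=> //; exists m, a, b; split => //.
  + by apply/meet_sub.
  + by apply/isucc_sub.
  + by apply/isucc_sub.
Qed.
End Aux.

Theorem lemma4p1 (S T : ordTree) (f : T -> S) (T' : {set T}) :
  rigid_surj f -> subtree T' ->
  subtree (f @: T') /\ rigid_surj_on T' (f @: T') f.
Proof.
move=> [_ [e [[_ Em El Er] fe ef]]] [T'n T'd].
have emono : forall v u : S, tle v u -> tle (e v) (e u).
  move=> v u vu.
  have : is_meet_on (@tle S) [set: S] v u v.
    by split; rewrite ?inE ?tle_refl.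
  by case/(Em _ _ _ (in_setT _) (in_setT _)).
have eB : forall v, v \in f @: T' -> e v \in T'.
  move=> v /imsetP [w wT ->]; exact: (T'd _ w wT (ef w (in_setT w))).
have Bd : forall v w, w \in f @: T' -> tle v w -> v \in f @: T'.
  move=> v w wB vw; rewrite -(fe v (in_setT v)); apply: imset_f.
  apply: (T'd _ _ (eB _ wB)); exact: emono.
have Bn : f @: T' != set0.
  case/set0Pn: T'n => x xT; apply/set0Pn; exists (f x); exact: imset_f.
split; first by split.
split; first by move=> w wT; apply: imset_f.
exists e; split => //; last by move=> w _; apply: ef; rewrite inE.
split => //.
- move=> v w m vB wB /(meet_sub Bd w m vB) hm.
  apply/(meet_sub T'd); first exact: eB.
  exact: Em (in_setT _) (in_setT _) hm.
- move=> v w vB wB /(lexle_sub Bd vB wB) hl.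
  apply/(lexle_sub T'd); try exact: eB.
  exact: El (in_setT _) (in_setT _) hl.
- move=> r [rB rmin].
  have [r0 r0min] := root_ex S.
  have r0B : r0 \in f @: T' by exact: Bd (r0min r).
  have rr0 : r = r0 by apply: tle_anti; [exact: rmin | exact: r0min].
  have hr : is_root_on (@tle S) [set: S] r0 by split; rewrite ?inE.
  case: (Er _ hr) => _ H.
  split; first exact: eB.
  move=> v _; rewrite rr0; apply: H; by rewrite inE.
- by move=> v _; apply: fe; rewrite inE.
Qed.
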